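(* Let $P$ be a poset, let $\Gamma$ and $\Gamma'$ be standard closure operators on $P$ with $\Gamma'\le\Gamma$, let $L_\Gamma$ and $L_{\Gamma'}$ be the complete lattices of $\Gamma$-closed and $\Gamma'$-closed subsets of $P$ (ordered by inclusion), and let $\eta:P\to L_\Gamma$, $\eta':P\to L_{\Gamma'}$ be the maps $p\mapsto p^\downarrow$. Then there is a unique completely join-preserving map $\phi:L_{\Gamma'}\to L_\Gamma$ with $\phi\circ\eta'=\eta$. Moreover, $L_\Gamma$ is a frame if and only if, for every standard closure operator $\Gamma'\le\Gamma$, the corresponding map $\phi$ preserves finite meets.
   Context: A closure operator on $P$ is a map $\Gamma:\wp(P)\to\wp(P)$ that is extensive, monotone and idempotent; it is standard if $\Gamma(\{p\})=p^\downarrow=\{q\in P:q\le p\}$ for all $p\in P$. A set $S$ is $\Gamma$-closed if $\Gamma(S)=S$. $\Gamma'\le\Gamma$ means $\Gamma'(S)\subseteq\Gamma(S)$ for all $S\subseteq P$. A frame is a complete lattice with $x\wedge\bigvee Y=\bigvee_{y\in Y}(x\wedge y)$. *)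

(* Defs.v *)
From Stdlib Require Import Relations List.
Set Implicit Arguments.

Section Defs.
Variable P : Type.

Definition pset := P -> Prop.
Definition incl (A B : pset) : Prop := forall x, A x -> B x.

Definition closure_operator (G : pset -> pset) : Prop :=
  (forall S, incl S (G S)) /\
  (forall S T, incl S T -> incl (G S) (G T)) /\
  (forall S, G (G S) = G S).

Definition downset (le : relation P) (p : P) : pset := fun q => le q p.

Definition standard (le : relation P) (G : pset -> pset) : Prop :=
  closure_operator G /\ forall p, G (fun q => q = p) = downset le p.

Definition cl_le (G' G : pset -> pset) : Prop := forall S, incl (G' S) (G S).

Definition closed (G : pset -> pset) (S : pset) : Prop := G S = S.

Definition Lclosed (G : pset -> pset) : Type := {S : pset | closed G S}.
Definition Lle (G : pset -> pset) (a b : Lclosed G) : Prop :=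
  incl (proj1_sig a) (proj1_sig b).
End Defs.

Definition is_lub {A : Type} (le : A -> A -> Prop) (X : A -> Prop) (s : A) : Prop :=
  (forall x, X x -> le x s) /\ (forall u, (forall x, X x -> le x u) -> le s u).
Definition is_glb {A : Type} (le : A -> A -> Prop) (X : A -> Prop) (m : A) : Prop :=
  (forall x, X x -> le m x) /\ (forall u, (forall x, X x -> le u x) -> le u m).

Definition image {A B : Type} (f : A -> B) (X : A -> Prop) : B -> Prop :=
  fun y => exists x, X x /\ y = f x.

Definition pair_set {A : Type} (x y : A) : A -> Prop := fun z => z = x \/ z = y.

Definition join_preserving {A B : Type} (leA : A -> A -> Prop) (leB : B -> B -> Prop)
  (f : A -> B) : Prop :=
  forall X s, is_lub leA X s -> is_lub leB (image f X) (f s).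

(* preserves finite meets (including the empty meet, i.e. top) *)
Definition preserves_finite_meets {A B : Type} (leA : A -> A -> Prop) (leB : B -> B -> Prop)
  (f : A -> B) : Prop :=
  forall (l : list A) m, is_glb leA (fun x => In x l) m ->
    is_glb leB (image f (fun x => In x l)) (f m).

Definition frame {A : Type} (le : A -> A -> Prop) : Prop :=
  (forall X : A -> Prop, exists s, is_lub le X s) /\
  (forall X : A -> Prop, exists m, is_glb le X m) /\
  (forall (x : A) (Y : A -> Prop) s m,
      is_lub le Y s -> is_glb le (pair_set x s) m ->
      is_lub le (fun z => exists y, Y y /\ is_glb le (pair_set x y) z) m).

(* phi o eta' = eta, where eta, eta' : p |-> p^downarrow *)
Definition commutes_eta {P : Type} (le : relation P) (G' G : pset P -> pset P)
  (phi : Lclosed G' -> Lclosed G) : Prop :=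
  forall (p : P) (x : Lclosed G'),
    proj1_sig x = downset le p -> proj1_sig (phi x) = downset le p.

(* Main.v *)
Require Import Defs.
From Stdlib Require Import Relations List.
From Stdlib Require Import FunctionalExtensionality PropExtensionality ProofIrrelevance.

Lemma set_ext {P : Type} (A B : pset P) : Defs.incl A B -> Defs.incl B A -> A = B.
Proof.
  intros h1 h2. apply functional_extensionality; intro x.
  apply propositional_extensionality; split; auto.
Qed.

Definition is_down {P : Type} (le : relation P) (S : pset P) :=
  forall p q, S p -> le q p -> S q.

Lemma std_ext {P le} {G : pset P -> pset P} : standard le G -> forall S, Defs.incl S (G S).
Proof. intros [[h _] _]; exact h. Qed.
Lemma std_mono {P le} {G : pset P -> pset P} : standard le G ->
  forall S T, Defs.incl S T -> Defs.incl (G S) (G T).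
Proof. intros [[_ [h _]] _]; exact h. Qed.
Lemma std_idem {P le} {G : pset P -> pset P} : standard le G -> forall S, G (G S) = G S.
Proof. intros [[_ [_ h]] _]; exact h. Qed.
Lemma std_down {P le} {G : pset P -> pset P} : standard le G ->
  forall p, G (fun q => q = p) = downset le p.
Proof. intros [_ h]; exact h. Qed.

Lemma std_downset_incl {P le} {G : pset P -> pset P} : standard le G ->
  forall S p q, S p -> le q p -> G S q.
Proof.
  intros HG S p q Sp lqp.
  assert (h : downset le p q) by exact lqp.
  rewrite <- (std_down HG) in h.
  eapply (std_mono HG); [|exact h]. intros x ->; exact Sp.
Qed.

Lemma closed_down {P le} {G : pset P -> pset P} : standard le G ->
  forall S, closed G S -> is_down le S.
Proof.
  intros HG S hS p q Sp lqp. unfold closed in hS. rewrite <- hS.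
  eapply std_downset_incl; eauto.
Qed.

Lemma downset_closed {P le} {G : pset P -> pset P} : standard le G ->
  forall p, closed G (downset le p).
Proof.
  intros HG p. unfold closed. rewrite <- (std_down HG). apply (std_idem HG).
Qed.

Definition mkdown {P le} {G : pset P -> pset P} (HG : standard le G) (p : P) : Lclosed G :=
  exist _ (downset le p) (downset_closed HG p).

Definition phiG {P le} (G' : pset P -> pset P) {G : pset P -> pset P} (HG : standard le G)
  (A : Lclosed G') : Lclosed G :=
  exist _ (G (proj1_sig A)) (std_idem HG (proj1_sig A)).

Definition bigU {P} {G : pset P -> pset P} (X : Lclosed G -> Prop) : pset P :=
  fun q => exists x, X x /\ proj1_sig x q.

Definition clG {P le} {G : pset P -> pset P} (HG : standard le G) (S : pset P) : Lclosed G :=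
  exist _ (G S) (std_idem HG S).

Lemma phiG_join {P le} {G' G : pset P -> pset P} (HG' : standard le G')
  (HG : standard le G) : cl_le G' G ->
  join_preserving (@Lle P G') (@Lle P G) (phiG G' HG).
Proof.
  intros hle X s [hub hl]. split.
  - intros y [x [Xx ->]]. unfold Lle; simpl. apply (std_mono HG). apply hub; auto.
  - intros u hu. unfold Lle in *; simpl.
    destruct u as [U hU]; simpl in *.
    assert (hs : Defs.incl (proj1_sig s) (U)).
    { specialize (hl (clG HG' (bigU X))).
      assert (h : Defs.incl (proj1_sig s) (G' (bigU X))).
      { apply hl. intros x Xx q xq. simpl. apply (std_ext HG'). exists x; auto. }
      intros q sq. apply h in sq. apply hle in sq. rewrite <- hU.
      revert sq. apply (std_mono HG).
      intros r [x [Xx xr]]. apply (hu (phiG G' HG x)). exists x; auto.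
      simpl. apply (std_ext HG); auto. }
    rewrite <- hU. apply (std_mono HG). exact hs.
Qed.

Lemma phiG_comm {P le} (G' : pset P -> pset P) {G : pset P -> pset P} (HG : standard le G) :
  commutes_eta le (phiG G' HG).
Proof.
  intros p x hx. simpl. rewrite hx. apply (downset_closed HG).
Qed.

Lemma phi_unique {P le} {G' G : pset P -> pset P} (Hle : order P le)
  (HG' : standard le G') (HG : standard le G) (phi : Lclosed G' -> Lclosed G) :
  join_preserving (@Lle P G') (@Lle P G) phi -> commutes_eta le phi ->
  forall A, proj1_sig (phi A) = G (proj1_sig A).
Proof.
  intros hj hc A.
  set (X := fun x : Lclosed G' => exists p, proj1_sig A p /\ proj1_sig x = downset le p).
  assert (hA : is_lub (@Lle P G') X A).
  { split.
    - intros x [p [Ap hx]] q hq. unfold Lle in hq |- *. rewrite hx in hq. destruct A as [A cA]; simpl in *.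
      rewrite <- cA. eapply std_downset_incl; eauto.
    - intros u hu q Aq. apply (hu (mkdown HG' q)).
      + exists q; split; auto.
      + simpl. unfold downset. apply (ord_refl _ _ Hle). }
  destruct (hj X A hA) as [hub hl].
  apply set_ext.
  - apply (hl (clG HG (proj1_sig A))). intros y [x [[p [Ap hx]] ->]].
    unfold Lle. rewrite (hc p x hx). simpl. intros q hq.
    eapply std_downset_incl; eauto.
  - destruct (phi A) as [S cS] eqn:E. simpl. rewrite <- cS.
    apply (std_mono HG). intros q Aq.
    assert (h := hub (phi (mkdown HG' q))). unfold Lle in h.
    apply h. exists (mkdown HG' q); split; auto. exists q; split; auto.
    rewrite (hc q (mkdown HG' q) eq_refl). unfold downset. apply (ord_refl _ _ Hle).
Qed.

Definition Dcl {P} (le : relation P) (S : pset P) : pset P :=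
  fun q => exists p, S p /\ le q p.

Lemma Dstd {P le} (Hle : order P le) : standard le (Dcl le).
Proof.
  destruct Hle as [hr ht ha].
  split; [split; [|split]|].
  - intros S q Sq. exists q; split; auto.
  - intros S T h q [p [Sp l]]. exists p; auto.
  - intros S. apply set_ext.
    + intros q [p [[r [Sr l1]] l2]]. exists r; split; eauto.
    + intros q h. exists q; split; auto.
  - intros p. apply set_ext.
    + intros q [r [-> l]]. exact l.
    + intros q l. exists p; auto.
Qed.

Lemma Dcl_closed {P le} (Hle : order P le) S : is_down le S -> closed (Dcl le) S.
Proof.
  intros hd. apply set_ext.
  - intros q [p [Sp l]]. eauto.
  - intros q Sq. exists q; split; auto. apply (ord_refl _ _ Hle).
Qed.

Definition interL {P} {G : pset P -> pset P} (l : list (Lclosed G)) : pset P :=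
  fun q => forall x, In x l -> proj1_sig x q.

Lemma lub_is_G {P le} {G : pset P -> pset P} (HG : standard le G)
  (Y : Lclosed G -> Prop) : is_lub (@Lle P G) Y (clG HG (bigU Y)).
Proof.
  split.
  - intros y Yy q yq. simpl. apply (std_ext HG). exists y; auto.
  - intros u hu. unfold Lle; simpl. destruct u as [U cU]; simpl.
    rewrite <- cU. apply (std_mono HG). intros q [y [Yy yq]]. apply (hu y Yy q yq).
Qed.

Lemma inter_closed {P le} {G : pset P -> pset P} (HG : standard le G)
  (x y : Lclosed G) : closed G (fun q => proj1_sig x q /\ proj1_sig y q).
Proof.
  apply set_ext.
  - intros q h. destruct x as [X cX], y as [Y cY]; simpl in *. split.
    + rewrite <- cX. revert h. apply (std_mono HG). intros r []; auto.
    + rewrite <- cY. revert h. apply (std_mono HG). intros r []; auto.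
  - apply (std_ext HG).
Qed.

Definition meet2 {P le} {G : pset P -> pset P} (HG : standard le G) (x y : Lclosed G)
  : Lclosed G := exist _ _ (inter_closed HG x y).

Lemma meet2_glb {P le} {G : pset P -> pset P} (HG : standard le G) (x y : Lclosed G) :
  is_glb (@Lle P G) (pair_set x y) (meet2 HG x y).
Proof.
  split.
  - intros z [-> | ->] q []; auto.
  - intros u hu q uq. simpl. split.
    + apply (hu x (or_introl eq_refl)); auto.
    + apply (hu y (or_intror eq_refl)); auto.
Qed.

Lemma distrib {P le} {G : pset P -> pset P} (HG : standard le G) :
  frame (@Lle P G) -> forall (x : Lclosed G) (Y : Lclosed G -> Prop) q,
  proj1_sig x q -> G (bigU Y) q ->
  G (fun r => exists y, Y y /\ proj1_sig x r /\ proj1_sig y r) q.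
Proof.
  intros [_ [_ hf]] x Y q xq Gq.
  set (s := clG HG (bigU Y)).
  destruct (hf x Y s (meet2 HG x s) (lub_is_G HG Y) (meet2_glb HG x s)) as [_ hl].
  specialize (hl (clG HG (fun r => exists y, Y y /\ proj1_sig x r /\ proj1_sig y r))).
  apply hl.
  - intros z [y [Yy [hz1 hz2]]] r zr. simpl. apply (std_ext HG).
    exists y. split; auto. split.
    + apply (hz1 x (or_introl eq_refl)); auto.
    + apply (hz1 y (or_intror eq_refl)); auto.
  - simpl. split; auto.
Qed.

Lemma frame_binary {P le} {G : pset P -> pset P} (Hle : order P le)
  (HG : standard le G) : frame (@Lle P G) ->
  forall A B, is_down le A -> is_down le B ->
  forall q, G A q -> G B q -> G (fun r => A r /\ B r) q.
Proof.
  intros hf A B dA dB q GA GB.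
  set (Ya := fun y : Lclosed G => exists p, A p /\ proj1_sig y = downset le p).
  set (Yb := fun y : Lclosed G => exists p, B p /\ proj1_sig y = downset le p).
  assert (hUa : forall S, is_down le S -> Defs.incl (G S) (G (bigU (fun y : Lclosed G => exists p, S p /\ proj1_sig y = downset le p)))).
  { intros S dS. apply (std_mono HG). intros r Sr. exists (mkdown HG r). split.
    - exists r; auto.
    - simpl. unfold downset. apply (ord_refl _ _ Hle). }
  assert (h := distrib HG hf (clG HG B) Ya q GB (hUa A dA q GA)).
  rewrite <- (std_idem HG (fun r => A r /\ B r)).
  revert h. apply (std_mono HG).
  intros r [y [[p [Ap hy]] [GBr yr]]]. rewrite hy in yr.
  assert (h2 := distrib HG hf (mkdown HG p) Yb r yr (hUa B dB r GBr)).
  revert h2. apply (std_mono HG).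
  intros t [z [[p' [Bp' hz]] [t1 t2]]]. simpl in t1. rewrite hz in t2.
  split; [exact (dA p t Ap t1) | exact (dB p' t Bp' t2)].
Qed.

Theorem proposition2p6 :
  forall (P : Type) (le : relation P), order P le ->
  forall G : pset P -> pset P, standard le G ->
    (forall G' : pset P -> pset P, standard le G' -> cl_le G' G ->
       exists! phi : Lclosed G' -> Lclosed G,
         join_preserving (@Lle P G') (@Lle P G) phi /\ commutes_eta le phi)
    /\
    (frame (@Lle P G) <->
       (forall G' : pset P -> pset P, standard le G' -> cl_le G' G ->
          forall phi : Lclosed G' -> Lclosed G,
            join_preserving (@Lle P G') (@Lle P G) phi -> commutes_eta le phi ->
            preserves_finite_meets (@Lle P G') (@Lle P G) phi)).
Proof.
  intros P le Hle G HG. split; [|split].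
  - intros G' HG' hle. exists (phiG G' HG). split.
    + split; [apply phiG_join; auto | apply phiG_comm].
    + intros phi [hj hc]. apply functional_extensionality. intro A.
      assert (E := phi_unique Hle HG' HG phi hj hc A).
      unfold phiG. destruct (phi A) as [S cS]. simpl in E. subst S.
      f_equal. apply proof_irrelevance.
  - intros hf G' HG' hle phi hj hc l m [hlb hgl].
    assert (E := phi_unique Hle HG' HG phi hj hc).
    split.
    + intros y [x [Inx ->]]. unfold Lle. rewrite !E. apply (std_mono HG). apply hlb; auto.
    + intros u hu. unfold Lle. rewrite E.
      assert (hd : is_down le (interL l)).
      { intros p q h lqp x Inx. destruct x as [X cX]. eapply (closed_down HG' _ cX); eauto.
        apply (h _ Inx). }
      assert (hcl : closed G' (interL l)).
      { apply set_ext; [|apply (std_ext HG')].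
        intros q h x Inx. destruct x as [X cX]; simpl. rewrite <- cX. revert h.
        apply (std_mono HG'). intros r hr. apply (hr _ Inx). }
      assert (him : Defs.incl (interL l) (proj1_sig m)).
      { apply (hgl (exist _ _ hcl)). intros x Inx q hq. apply (hq _ Inx). }
      assert (key : forall q, (forall x, In x l -> G (proj1_sig x) q) -> G (interL l) q).
      { clear hu him hcl hd hlb hgl. induction l as [|a l IH]; intros q hq.
        - apply (std_ext HG). intros x [].
        - assert (hdl : is_down le (interL l)).
          { intros p r h lrp x Inx. destruct x as [X cX]. eapply (closed_down HG' _ cX); eauto.
            apply (h _ Inx). }
          assert (h1 := IH q (fun x Inx => hq x (or_intror Inx))).
          assert (h0 := hq a (or_introl eq_refl)).
          destruct a as [Aa cA].
          assert (h2 := frame_binary Hle HG hf _ _ (closed_down HG' _ cA) hdl q h0 h1).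
          revert h2. apply (std_mono HG). intros r [ra rl] x [<- | Inx]; auto. }
      intros q uq. apply (std_mono HG _ _ him). apply key.
      intros x Inx. rewrite <- E. apply (hu (phi x)); auto. exists x; auto.
  - intros H.
    assert (HD := Dstd Hle).
    assert (hleD : cl_le (Dcl le) G).
    { intros S q [p [Sp l]]. eapply std_downset_incl; eauto. }
    assert (pm := H (Dcl le) HD hleD (phiG _ HG) (phiG_join HD HG hleD) (phiG_comm _ HG)).
    assert (bin : forall A B, is_down le A -> is_down le B ->
              forall q, G A q -> G B q -> G (fun r => A r /\ B r) q).
    { intros A B dA dB q GA GB.
      set (a := exist _ A (Dcl_closed Hle _ dA) : Lclosed (Dcl le)).
      set (b := exist _ B (Dcl_closed Hle _ dB) : Lclosed (Dcl le)).
      assert (dAB : is_down le (fun r => A r /\ B r)).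
      { intros p r [] l; split; eauto. }
      set (m := exist _ _ (Dcl_closed Hle _ dAB) : Lclosed (Dcl le)).
      assert (hm : is_glb (@Lle P (Dcl le)) (fun x => In x (a :: b :: nil)) m).
      { split.
        - intros x [<- | [<- | []]] r []; auto.
        - intros u hu r ur. split.
          + apply (hu a (or_introl eq_refl)); auto.
          + apply (hu b (or_intror (or_introl eq_refl))); auto. }
      destruct (pm _ _ hm) as [_ hg].
      set (u := meet2 HG (phiG _ HG a) (phiG _ HG b)).
      apply (hg u); [|simpl; auto].
      intros y [x [Inx ->]] r [h1 h2]. destruct Inx as [<- | [<- | []]]; auto. }
    split; [|split].
    + intros X. exists (clG HG (bigU X)). apply lub_is_G.
    + intros X.
      assert (hc : closed G (fun q => forall x, X x -> proj1_sig x q)).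
      { apply set_ext; [|apply (std_ext HG)].
        intros q h x Xx. destruct x as [S cS]; simpl. rewrite <- cS. revert h.
        apply (std_mono HG). intros r hr. apply (hr _ Xx). }
      exists (exist _ _ hc). split.
      * intros x Xx q hq. apply (hq _ Xx).
      * intros u hu q uq x Xx. apply (hu x Xx q uq).
    + intros x Y s m [sub sl] [mlb mgl]. split.
      * intros z [y [Yy [zlb zgl]]]. apply mgl. intros w [-> | ->].
        -- apply zlb; left; auto.
        -- intros q zq. apply (sub y Yy). apply (zlb y (or_intror eq_refl)); auto.
      * intros u hu q mq.
        assert (xq : proj1_sig x q) by (apply (mlb x (or_introl eq_refl)); auto).
        assert (sq : proj1_sig s q) by (apply (mlb s (or_intror eq_refl)); auto).
        assert (sG : G (bigU Y) q).
        { apply (sl (clG HG (bigU Y))); auto.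
          intros y Yy r yr. simpl. apply (std_ext HG). exists y; auto. }
        destruct x as [Xs cX]. simpl in xq.
        assert (dX := closed_down HG _ cX).
        assert (dU : is_down le (bigU Y)).
        { intros p r [y [Yy yp]] l. exists y; split; auto.
          destruct y as [Ys cY]. eapply (closed_down HG _ cY); eauto. }
        assert (Gx : G Xs q) by (rewrite cX; auto).
        assert (h := bin _ _ dX dU q Gx sG).
        destruct u as [U cU]. simpl. rewrite <- cU. revert h. apply (std_mono HG).
        intros r [xr [y [Yy yr]]].
        apply (hu (meet2 HG (exist _ Xs cX) y)).
        -- exists y; split; auto. apply meet2_glb.
        -- simpl. auto.
Qed.
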